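(* Let $d\ge 2$, $\underline E\subset\mathbb F_q^{d-1}$, $A\subset\mathbb F_q$, and $E=\underline E\times A\subset\mathbb F_q^{d-1}\times\mathbb F_q=\mathbb F_q^d$. Then $$\mathfrak M(E)\leq 2q^{-d-1}|A|^2|\underline E|.$$
   Context: $\mathbb F_q$ is a finite field of characteristic greater than two, and $\chi$ is a fixed nontrivial additive character of $\mathbb F_q$. For $f:\mathbb F_q^d\to\mathbb C$, $\widehat f(m)=q^{-d}\sum_{x\in\mathbb F_q^d}\chi(-m\cdot x)f(x)$; sets are identified with their indicator functions. For $m\in\mathbb F_q^d$, $\|m\|=m_1^2+\dots+m_d^2$; $S_r=\{x\in\mathbb F_q^d:\|x\|=r\}$. $\mathfrak M(E)=\max_{r\in\mathbb F_q}\sum_{m\in S_r}|\widehat E(m)|^2$. *)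

(* Defs.v *)
From HB Require Import structures.
From mathcomp Require Import all_boot all_order all_algebra all_field.
Set Implicit Arguments. Unset Strict Implicit. Unset Printing Implicit Defensive.
Import Order.TTheory GRing.Theory Num.Theory.
Local Open Scope ring_scope.

Definition nontriv_add_char (F : finFieldType) (chi : F -> algC) : Prop :=
  [/\ chi 0 = 1, (forall x y : F, chi (x + y) = chi x * chi y)
    & exists x : F, chi x != 1].

Definition dotv (F : finFieldType) (d : nat) (m x : 'rV[F]_d) : F :=
  \sum_(i < d) m 0 i * x 0 i.

Definition normq (F : finFieldType) (d : nat) (m : 'rV[F]_d) : F :=
  \sum_(i < d) m 0 i ^+ 2.

Definition sphere (F : finFieldType) (d : nat) (r : F) : {set 'rV[F]_d} :=
  [set x : 'rV[F]_d | normq x == r].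

Definition fourier (F : finFieldType) (chi : F -> algC) (d : nat)
    (f : 'rV[F]_d -> algC) (m : 'rV[F]_d) : algC :=
  (#|F|%:R ^+ d)^-1 * \sum_(x : 'rV[F]_d) chi (- dotv m x) * f x.

Definition indic (T : finType) (E : {set T}) : T -> algC :=
  fun x => (x \in E)%:R.

(* M(E) = max_r sum_{m in S_r} |Ehat(m)|^2 (all terms are nonnegative reals) *)
Definition frakM (F : finFieldType) (chi : F -> algC) (d : nat)
    (E : {set 'rV[F]_d}) : algC :=
  \big[Num.max/0]_(r : F) \sum_(m in sphere d r) `|fourier chi (indic E) m| ^+ 2.

Definition prodset (F : finFieldType) (n : nat) (Ebar : {set 'rV[F]_n})
    (A : {set F}) : {set 'rV[F]_(n + 1)} :=
  [set x : 'rV[F]_(n + 1) | (lsubmx x \in Ebar) && (rsubmx x 0 0 \in A)].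

(* Main.v *)
Require Import Defs.
From HB Require Import structures.
From mathcomp Require Import all_boot all_order all_algebra all_field.
Set Implicit Arguments. Unset Strict Implicit. Unset Printing Implicit Defensive.
Import Order.TTheory GRing.Theory Num.Theory.
Local Open Scope ring_scope.
From mathcomp Require Import ring.

Section Chi.
Variables (F : finFieldType) (chi : F -> algC).
Hypothesis hchi : nontriv_add_char chi.

Lemma chi0 : chi 0 = 1. Proof. by case: hchi. Qed.
Lemma chiD x y : chi (x + y) = chi x * chi y. Proof. by case: hchi. Qed.
Lemma chiNK x : chi (- x) * chi x = 1.
Proof. by rewrite -chiD addNr chi0. Qed.
Lemma chi_neq0 x : chi x != 0.
Proof. by apply/eqP=> h; have := chiNK x; rewrite h mulr0 => /eqP; rewrite eq_sym oner_eq0. Qed.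
Lemma chiMn x k : chi (x *+ k) = chi x ^+ k.
Proof. elim: k => [|k IH]; first by rewrite mulr0n chi0 expr0.
by rewrite mulrS chiD IH exprS. Qed.
Lemma norm_chi x : `|chi x| = 1.
Proof.
case: (finPcharP F) => p pp chp.
have h : chi x ^+ p = 1 by rewrite -chiMn -mulr_natl (pcharf0 chp) mul0r chi0.
have : `|chi x| ^+ p == 1 by rewrite -normrX h normr1.
by rewrite pexpr_eq1 ?prime_gt0 // => /eqP.
Qed.
Lemma conj_chi x : (chi x)^* = chi (- x).
Proof.
have h1 : chi x * (chi x)^* = 1 by rewrite -normCK norm_chi expr1n.
apply: (mulfI (chi_neq0 x)); by rewrite h1 mulrC chiNK.
Qed.
End Chi.

Section Orth.
Variables (F : finFieldType) (chi : F -> algC).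
Hypothesis hchi : nontriv_add_char chi.

Lemma dotvDl d (a b x : 'rV[F]_d) : dotv (a + b) x = dotv a x + dotv b x.
Proof. by rewrite /dotv -big_split; apply: eq_bigr => i _; rewrite mxE mulrDl. Qed.
Lemma dotvBr d (a x y : 'rV[F]_d) : dotv a (x - y) = dotv a x - dotv a y.
Proof. by rewrite /dotv -sumrB; apply: eq_bigr => i _; rewrite !mxE mulrBr. Qed.
Lemma dotv0r d (a : 'rV[F]_d) : dotv a 0 = 0.
Proof. by rewrite /dotv big1 // => i _; rewrite mxE mulr0. Qed.
Lemma dotv_delta d (c : F) (i : 'I_d) (x : 'rV[F]_d) :
  dotv (c *: delta_mx 0 i) x = c * x 0 i.
Proof.
rewrite /dotv (bigD1 i) //= big1 ?addr0; first by rewrite !mxE !eqxx mulr1.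
by move=> j /negbTE hj; rewrite !mxE hj mulr0 mul0r.
Qed.

Lemma qneq0 : (#|F|%:R : algC) != 0.
Proof. by rewrite pnatr_eq0 -lt0n; apply/card_gt0P; exists 0. Qed.

Lemma orth d (z : 'rV[F]_d) :
  \sum_(y : 'rV[F]_d) chi (dotv y z) = (z == 0)%:R * #|F|%:R ^+ d.
Proof.
have [->|nz] := eqVneq z 0.
  rewrite mul1r (eq_bigr (fun _ => 1)); last by move=> y _; rewrite dotv0r (chi0 hchi).
  by rewrite sumr_const card_mx mul1n natrX -[in RHS]mulr_natl mulr1 ?natrX.
rewrite mul0r.
have [i zi] : exists i, z 0 i != 0.
  apply/existsP; apply: contraR nz => /existsPn h; apply/eqP/rowP => j.
  by rewrite mxE; apply/eqP; have := h j; rewrite negbK.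
case: hchi => _ _ [x0 hx0].
pose w : 'rV[F]_d := (x0 / z 0 i) *: delta_mx 0 i.
set S := \sum_y _.
have : S = chi x0 * S.
  rewrite {1}/S (reindex_inj (addIr w)) /= /S mulr_sumr; apply: eq_bigr => y _.
  rewrite dotvDl chiD ?dotv_delta ?divfK // mulrC //; idtac.
  all: idtac.
move/eqP; rewrite -subr_eq0 -{1}[S]mul1r -mulrBl mulf_eq0 subr_eq0 eq_sym (negbTE hx0) /=.
by move/eqP.
Qed.

Lemma sum_indic (T : finType) (E : {set T}) : \sum_x indic E x = #|E|%:R.
Proof.
rewrite (eq_bigr (fun x => if x \in E then 1 else 0)); last by move=> x _; rewrite /indic; case: (x \in E).
by rewrite -big_mkcond sumr_const.
Qed.

Lemma plancherel d (E : {set 'rV[F]_d}) :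
  \sum_y `|fourier chi (indic E) y| ^+ 2 = (#|F|%:R ^+ d)^-1 * #|E|%:R.
Proof.
set qn : algC := #|F|%:R ^+ d.
have qn0 : qn != 0 by rewrite expf_neq0 // qneq0.
have e1 y : `|fourier chi (indic E) y| ^+ 2 = qn^-2 *
   \sum_x \sum_x' indic E x * indic E x' * chi (dotv y (x' - x)).
  rewrite normCK /fourier rmorphM rmorph_sum /= mulrACA.
  rewrite rmorphV ?unitfE // rmorphXn /= conjC_nat -expr2 exprVn; congr (_ * _).
  rewrite big_distrl /=; apply: eq_bigr => x _; rewrite big_distrr /=; apply: eq_bigr => x' _.
  rewrite rmorphM /= conj_chi // opprK /indic conjC_nat dotvBr.
  rewrite [_ - _]addrC chiD //; ring.
rewrite (eq_bigr _ (fun y _ => e1 y)) -mulr_sumr.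
rewrite (exchange_big) /=.
rewrite (eq_bigr (fun x => indic E x * qn)); last first.
  move=> x _; rewrite exchange_big /=.
  rewrite (eq_bigr (fun x' => indic E x * indic E x' * ((x' - x == 0)%:R * qn))); last first.
    by move=> x' _; rewrite -mulr_sumr orth.
  rewrite (bigD1 x) //= subrr eqxx mul1r big1 ?addr0.
    by rewrite /indic; case: (x \in E); rewrite ?mul1r ?mul0r.
  by move=> x' hx; rewrite subr_eq0 (negbTE hx) mul0r mulr0.
rewrite -mulr_suml sum_indic.
by rewrite expr2 invfM mulrC mulrA mulrK ?unitfE // mulrC.
Qed.
End Orth.

Section Split.
Variables (F : finFieldType) (n : nat).

Definition joinv (y : 'rV[F]_n) (t : F) : 'rV[F]_(n + 1) := row_mx y t%:M.

Lemma sum_split (H : 'rV[F]_(n + 1) -> algC) :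
  \sum_m H m = \sum_(y : 'rV[F]_n) \sum_(t : F) H (joinv y t).
Proof.
rewrite pair_big /=.
rewrite (reindex (fun p : 'rV[F]_n * F => joinv p.1 p.2)) //=.
exists (fun m : 'rV[F]_(n+1) => (lsubmx m, rsubmx m 0 0)) => [[y t] _|m _] /=.
  by rewrite /joinv row_mxKl row_mxKr mxE eqxx mulr1n.
by rewrite /joinv -mx11_scalar hsubmxK.
Qed.

Lemma sum_rw (f : 'I_(n + 1) -> F) :
  \sum_(i < n + 1) f i = \sum_(i < n) f (lshift 1 i) + f (rshift n ord0).
Proof. by rewrite big_split_ord /= big_ord1. Qed.

Lemma dotv_rw (a b : 'rV[F]_n) (s t : F) : dotv (joinv a s) (joinv b t) = dotv a b + s * t.
Proof.
rewrite /dotv sum_rw /joinv; congr (_ + _).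
  by apply: eq_bigr => i _; rewrite !row_mxEl.
by rewrite !row_mxEr !mxE eqxx !mulr1n.
Qed.

Lemma normq_rw (a : 'rV[F]_n) (s : F) : Defs.normq (joinv a s) = Defs.normq a + s ^+ 2.
Proof.
rewrite /Defs.normq sum_rw /joinv; congr (_ + _).
  by apply: eq_bigr => i _; rewrite !row_mxEl.
by rewrite !row_mxEr !mxE eqxx !mulr1n.
Qed.

Lemma indic_rw (Eb : {set 'rV[F]_n}) (A : {set F}) y t :
  indic (prodset Eb A) (joinv y t) = indic Eb y * indic A t.
Proof.
rewrite /indic /prodset inE /joinv row_mxKl row_mxKr mxE eqxx mulr1n.
by case: (y \in Eb); case: (t \in A); rewrite ?mulr1 ?mulr0.
Qed.

Variables (chi : F -> algC).
Hypothesis hchi : nontriv_add_char chi.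

Definition ahat (A : {set F}) (c : F) : algC :=
  (#|F|%:R)^-1 * \sum_t chi (- (c * t)) * indic A t.

Lemma fourier_split (Eb : {set 'rV[F]_n}) (A : {set F}) y c :
  fourier chi (indic (prodset Eb A)) (joinv y c) = fourier chi (indic Eb) y * ahat A c.
Proof.
rewrite /fourier /ahat sum_split exprD expr1 invfM mulrACA; congr (_ * _).
rewrite big_distrl /=; apply: eq_bigr => y' _; rewrite big_distrr /=.
apply: eq_bigr => t _; rewrite dotv_rw indic_rw opprD chiD //; ring.
Qed.

Lemma ahat_bound (A : {set F}) c : `|ahat A c| ^+ 2 <= ((#|F|%:R)^-1 * #|A|%:R) ^+ 2.
Proof.
have h : `|ahat A c| <= (#|F|%:R)^-1 * #|A|%:R.
  rewrite /ahat normrM normfV normr_nat ler_pM2l ?invr_gt0 ?ltr0n ?lt0n ?qneq0 //; last first.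
    by rewrite -(pnatr_eq0 algC) qneq0.
  apply: le_trans (ler_norm_sum _ _ _) _.
  rewrite -sum_indic ler_sum // => t _.
  by rewrite normrM norm_chi // mul1r /indic normr_nat.
by rewrite !expr2 ler_pM.
Qed.

Lemma count_sq (a r : F) : \sum_(c : F) ((a + c ^+ 2 == r)%:R : algC) <= 2.
Proof.
case: (pickP (fun c => a + c ^+ 2 == r)) => [c0 h0|none]; last first.
  by rewrite big1 ?ler0n // => c _; rewrite none.
apply: (@le_trans _ _ (\sum_c ((c == c0)%:R + (c == - c0)%:R))).
  apply: ler_sum => c _; rewrite -natrD ler_nat.
  case hc: (a + c ^+ 2 == r) => //=.
  have : c ^+ 2 - c0 ^+ 2 == 0.
    have e : c ^+ 2 = c0 ^+ 2 by apply: (addrI a); rewrite (eqP hc) (eqP h0).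
    by rewrite e subrr.
  rewrite subr_sqr mulf_eq0 subr_eq0 addr_eq0.
  by case/orP => ->; rewrite ?addn0 ?addn1 // addnC.
have s1 x : \sum_(i : F) ((i == x)%:R : algC) = 1.
  by rewrite (bigD1 x) //= eqxx big1 ?addr0 // => i /negbTE ->.
by rewrite big_split /= !s1.
Qed.
End Split.

Theorem mainTheorem12 (F : finFieldType) (hchar : ~~ (2%N \in [pchar F]))
    (chi : F -> algC) (hchi : nontriv_add_char chi)
    (n : nat) (hn : (1 <= n)%N) (Ebar : {set 'rV[F]_n}) (A : {set F}) :
  frakM chi (prodset Ebar A) <=
    2 * (#|F|%:R ^+ (n + 1 + 1))^-1 * #|A|%:R ^+ 2 * #|Ebar|%:R.
Proof.
set K := (X in _ <= X).
set q : algC := #|F|%:R.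
have q0 : q != 0 by apply: qneq0.
set B := (q^-1 * #|A|%:R) ^+ 2.
have B0 : 0 <= B by rewrite /B exprn_ge0 // mulr_ge0 ?invr_ge0 ?ler0n.
have eK : K = B * 2 * ((q ^+ n)^-1 * #|Ebar|%:R).
  rewrite /K /B -/q !exprD !invfM expr1 exprMn expr2; ring.
have K0 : 0 <= K by rewrite eK !mulr_ge0 ?ler0n ?invr_ge0 ?exprn_ge0 ?ler0n.
rewrite /frakM; apply: (big_ind (fun x => x <= K)) => //.
  by move=> x y hx hy; rewrite /Order.max; case: ifP.
move=> r _.
rewrite big_mkcond /= sum_split.
set Eh := fun y => fourier chi (indic Ebar) y.
apply: (@le_trans _ _ (\sum_y \sum_t ((Defs.normq y + t ^+ 2 == r)%:R * `|Eh y| ^+ 2 * B))).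
  apply: ler_sum => y _; apply: ler_sum => t _.
  rewrite /sphere inE normq_rw fourier_split // normrM exprMn.
  case: (_ == r); rewrite ?mul0r ?mul1r //.
  by rewrite ler_wpM2l ?exprn_ge0 ?normr_ge0 // ahat_bound.
apply: (@le_trans _ _ (\sum_y `|Eh y| ^+ 2 * B * 2)).
  apply: ler_sum => y _.
  rewrite (eq_bigr (fun t => `|Eh y| ^+ 2 * B * (Defs.normq y + t ^+ 2 == r)%:R)); last first.
    by move=> t _; ring.
  rewrite -mulr_sumr; apply: ler_wpM2l; last exact: count_sq.
  by apply: mulr_ge0 => //; apply: exprn_ge0; apply: normr_ge0.
rewrite -mulr_suml -mulr_suml /Eh plancherel // eK -/q.
by rewrite le_eqVlt; apply/orP; left; apply/eqP; ring.
Qed.
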